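(* Let $a\in\mathbb{C}_p$, $a\ne0$, $A=|a|_p$, and $f(x)=\frac{ax}{x^2+a}$. If $y_0,y_1,\dots,y_k\in\mathbb{C}_p\setminus\{\pm\sqrt{-a}\}$ form a periodic orbit of $f$, i.e. $f(y_i)=y_{i+1}$ for $0\le i<k$ and $f(y_k)=y_0$, then $$|y_0|_p=|y_1|_p=\dots=|y_k|_p\le\sqrt A.$$ *)

(* Defs.v *)
From HB Require Import structures.
From mathcomp Require Import all_boot all_order all_algebra.
Set Implicit Arguments. Unset Strict Implicit. Unset Printing Implicit Defensive.
Import Order.TTheory GRing.Theory Num.Theory.
Local Open Scope ring_scope.

Definition nonarch_abs (K : fieldType) (R : realFieldType) (abs : K -> R) : Prop :=
  [/\ forall x, 0 <= abs x,
      forall x, abs x = 0 <-> x = 0,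
      forall x y, abs (x * y) = abs x * abs y
    & forall x y, abs (x + y) <= Num.max (abs x) (abs y)].

Definition abs_complete (K : fieldType) (R : realFieldType) (abs : K -> R) : Prop :=
  forall u : nat -> K,
    (forall eps : R, 0 < eps -> exists N, forall m n, (N <= m)%N -> (N <= n)%N ->
        abs (u m - u n) < eps) ->
    exists l : K, forall eps : R, 0 < eps -> exists N, forall n, (N <= n)%N ->
        abs (u n - l) < eps.

Definition Cp_like (p : nat) (K : closedFieldType) (R : rcfType) (abs : K -> R) : Prop :=
  [/\ prime p, nonarch_abs abs, abs_complete abs & abs (p%:R) = (p%:R)^-1].

Definition fa (K : fieldType) (a x : K) : K := a * x / (x ^+ 2 + a).

(* Main.v *)
Require Import Defs.
From HB Require Import structures.
From mathcomp Require Import all_boot all_order all_algebra.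
From mathcomp Require Import lra.
Import Order.TTheory GRing.Theory Num.Theory.
Local Open Scope ring_scope.

Section Helpers.
Variables (K : fieldType) (R : rcfType) (abs : K -> R).
Hypothesis habs : nonarch_abs abs.

Lemma abs_ge0 x : 0 <= abs x.
Proof. by case: habs. Qed.
Lemma abs_eq0 x : abs x = 0 <-> x = 0.
Proof. by case: habs. Qed.
Lemma absM x y : abs (x * y) = abs x * abs y.
Proof. by case: habs. Qed.
Lemma absD x y : abs (x + y) <= Num.max (abs x) (abs y).
Proof. by case: habs. Qed.

Lemma abs1 : abs 1 = 1.
Proof.
have h := absM 1 1; rewrite mulr1 in h.
have h0 : abs 1 != 0 by apply/eqP => /abs_eq0 /eqP; rewrite oner_eq0.
have : abs 1 * (abs 1 - 1) = 0 by rewrite mulrBr mulr1 -h subrr.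
by move/eqP; rewrite mulf_eq0 (negbTE h0) /= subr_eq0 => /eqP.
Qed.

Lemma absN x : abs (- x) = abs x.
Proof.
have hm : abs (-1) = 1.
  have h := absM (-1) (-1); rewrite mulrNN mulr1 abs1 in h.
  have g := abs_ge0 (-1). nra.
by rewrite -mulN1r absM hm mul1r.
Qed.

Lemma absV x : x != 0 -> abs (x^-1) = (abs x)^-1.
Proof.
move=> hx; have h := absM x (x^-1); rewrite mulfV // abs1 in h.
have hx' : abs x != 0 by apply/eqP => /abs_eq0 /eqP; rewrite (negbTE hx).
by apply: (mulfI hx'); rewrite -h mulfV.
Qed.

Lemma abs_strict x y : abs x < abs y -> abs (x + y) = abs y.
Proof.
move=> hxy; apply/eqP; rewrite eq_le; apply/andP; split.
  by have := absD x y; rewrite (max_idPr (ltW hxy)).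
have := absD (x + y) (- x); rewrite (addrC (x + y)) addKr absN.
case: (leP (abs (x + y)) (abs x)) => hm h //.
by have := lt_le_trans hxy h; rewrite ltxx.
Qed.

Lemma absX2 x : abs (x ^+ 2) = abs x ^+ 2.
Proof. by rewrite !expr2 absM. Qed.

Lemma step a x : a != 0 -> x ^+ 2 + a != 0 ->
  [/\ abs x ^+ 2 < abs a -> abs (fa a x) = abs x,
      abs a < abs x ^+ 2 -> abs (fa a x) ^+ 2 < abs a
    & abs x ^+ 2 = abs a -> abs a <= abs (fa a x) ^+ 2].
Proof.
move=> ha hd.
have hA : 0 < abs a.
  rewrite lt_def abs_ge0 andbT; apply/eqP => /abs_eq0 /eqP; by rewrite (negbTE ha).
have hD : 0 < abs (x ^+ 2 + a).
  rewrite lt_def abs_ge0 andbT; apply/eqP => /abs_eq0 /eqP; by rewrite (negbTE hd).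
have hf : abs (fa a x) = abs a * abs x / abs (x ^+ 2 + a).
  by rewrite /fa absM absM absV.
have hr := abs_ge0 x.
split.
- move=> h; rewrite hf abs_strict ?absX2 //.
  by rewrite [abs a * _]mulrC mulfK ?gt_eqF.
- move=> h; rewrite hf addrC abs_strict ?absX2 //.
  have hx : 0 < abs x by nra.
  have -> : abs a * abs x / abs x ^+ 2 = abs a / abs x.
    by rewrite expr2 invfM mulrA mulfK // gt_eqF.
  rewrite expr_div_n ltr_pdivrMr ?exprn_gt0 //. nra.
- move=> h; rewrite hf.
  have hle : abs (x ^+ 2 + a) <= abs a.
    by have := absD (x ^+ 2) a; rewrite absX2 h maxxx.
  have hx : 0 < abs x by nra.
  have : abs x <= abs a * abs x / abs (x ^+ 2 + a).
    rewrite ler_pdivlMr //. nra.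
  move=> g; have : abs x ^+ 2 <= (abs a * abs x / abs (x ^+ 2 + a)) ^+ 2.
    by rewrite lerXn2r // nnegrE; lra.
  by rewrite h.
Qed.

End Helpers.

Theorem proposition4p1 (p : nat) (K : closedFieldType) (R : rcfType) (abs : K -> R)
  (hK : Cp_like p abs) (a : K) (ha : a != 0) (k : nat) (y : nat -> K)
  (hnot : forall i, (i <= k)%N -> forall s : K, s ^+ 2 = - a -> y i != s)
  (horb : forall i, (i < k)%N -> fa a (y i) = y i.+1)
  (hcl : fa a (y k) = y 0%N) :
  (forall i, (i <= k)%N -> abs (y i) = abs (y 0%N)) /\
  abs (y 0%N) <= Num.sqrt (abs a).
Proof.
case: hK => _ habs _ _.
set A := abs a.
pose nx i := if (i < k)%N then i.+1 else 0%N.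
have hnx : forall i, (i <= k)%N -> (nx i <= k)%N.
  by move=> i hi; rewrite /nx; case: ltnP.
have hf : forall i, (i <= k)%N -> fa a (y i) = y (nx i).
  move=> i hi; rewrite /nx; case: ltnP => h; first exact: horb.
  by have -> : i = k by apply/eqP; rewrite eqn_leq hi h.
have hst : forall i, (i <= k)%N -> [/\ abs (y i) ^+ 2 < A -> abs (y (nx i)) = abs (y i),
      A < abs (y i) ^+ 2 -> abs (y (nx i)) ^+ 2 < A
    & abs (y i) ^+ 2 = A -> A <= abs (y (nx i)) ^+ 2].
  move=> i hi; rewrite -hf //; apply: step => //.
  apply/negP => /eqP h.
  suff : y i ^+ 2 = - a by move/(hnot i hi); rewrite eqxx.
  by apply/eqP; rewrite -subr_eq0 opprK h.
have fwd : forall i, (i <= k)%N -> abs (y i) ^+ 2 < A ->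
    forall d, (i + d <= k)%N -> abs (y (i + d)%N) = abs (y i).
  move=> i hi hP; elim=> [|d IH] hd; first by rewrite addn0.
  have hd' : (i + d < k)%N by rewrite -addnS.
  have [h1 _ _] := hst (i + d)%N (ltnW hd').
  by rewrite addnS -IH ?(ltnW hd') // -h1 ?IH ?(ltnW hd') // /nx hd'.
have toP0 : forall i, (i <= k)%N -> abs (y i) ^+ 2 < A -> abs (y 0%N) ^+ 2 < A.
  move=> i hi hP; have := fwd i hi hP (k - i)%N; rewrite subnKC // => /(_ (leqnn k)) e.
  have [h1 _ _] := hst k (leqnn k).
  have e0 : y (nx k) = y 0%N by rewrite /nx ltnn.
  by rewrite -e0 h1 e.
have sq : abs (y 0%N) ^+ 2 <= A -> abs (y 0%N) <= Num.sqrt A.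
  move=> h; rewrite -(ger0_norm (@abs_ge0 _ _ _ habs (y 0%N))) -sqrtr_sqr.
  exact: ler_wsqrtr.
case: (ltP (abs (y 0%N) ^+ 2) A) => h0.
  split; last exact: sq (ltW h0).
  by move=> i hi; have := fwd 0%N (leq0n k) h0 i; rewrite add0n => ->.
have all_ge : forall i, (i <= k)%N -> A <= abs (y i) ^+ 2.
  move=> i hi; case: (ltP (abs (y i) ^+ 2) A) => // h.
  by have := toP0 i hi h; rewrite ltNge h0.
have all_eq : forall i, (i <= k)%N -> abs (y i) ^+ 2 = A.
  move=> i hi; apply/eqP; rewrite eq_le all_ge // andbT leNgt; apply/negP => h.
  have [_ h2 _] := hst i hi.
  by have := toP0 _ (hnx i hi) (h2 h); rewrite ltNge h0.
split; last by apply: sq; rewrite all_eq.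
move=> i hi; apply/eqP; rewrite -(eqrXn2 (n:=2)) ?(@abs_ge0 _ _ _ habs) //.
by rewrite all_eq // all_eq.
Qed.
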